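(* Let $n\ge 2$, $q\ge 2$ be integers and let $S\subseteq\bigcup_{i=2}^n\mathbb{Z}_q^i$ be a $q$-ary (variable-length) non-overlapping code with all codeword lengths at most $n$. Let $C(n,q)$ denote the maximum size of a fixed-length $q$-ary non-overlapping code $S'\subseteq\mathbb{Z}_q^n$. Then $|S|\le C(n,q)$.
   Context: $\mathbb{Z}_q=\{0,1,\dots,q-1\}$; words are finite strings over $\mathbb{Z}_q$, $|\mathbf{s}|$ denotes the length of $\mathbf{s}$. For $\mathbf{s}=(s_1,\dots,s_m)$, $\mathrm{pre}(\mathbf{s})=\{(s_1,\dots,s_k):1\le k\le m-1\}$ and $\mathrm{suf}(\mathbf{s})=\{(s_{m-k+1},\dots,s_m):1\le k\le m-1\}$ are the sets of nontrivial prefixes and suffixes. A code $S\subseteq\bigcup_{i=2}^n\mathbb{Z}_q^i$ is non-overlapping if (1) for all $\mathbf{u},\mathbf{v}\in S$ (possibly equal), $\mathrm{pre}(\mathbf{u})\cap\mathrm{suf}(\mathbf{v})=\emptyset$, and (2) for all distinct $\mathbf{u},\mathbf{v}\in S$ with $|\mathbf{u}|\le|\mathbf{v}|$, $\mathbf{u}$ is not a (contiguous) subword of $\mathbf{v}$. A fixed-length code of length $n$ is a subset of $\mathbb{Z}_q^n$ (for it condition (2) is automatic). *)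

(* Defs.v *)
From mathcomp Require Import all_boot.
Set Implicit Arguments. Unset Strict Implicit. Unset Printing Implicit Defensive.

Definition pre {T : Type} (s : seq T) : seq (seq T) :=
  [seq take k s | k <- iota 1 (size s).-1].
Definition suf {T : Type} (s : seq T) : seq (seq T) :=
  [seq drop (size s - k) s | k <- iota 1 (size s).-1].

Definition non_overlapping {T : eqType} (S : seq (seq T)) : bool :=
  all (fun u => all (fun v =>
    all (fun w => w \notin suf v) (pre u) &&
    ((u != v) ==> (size u <= size v) ==> ~~ infix u v)) S) S.

Definition Cnq (n q : nat) : nat :=
  \max_(A : {set n.-tuple 'I_q} |
          non_overlapping [seq val x | x in A]) #|A|.

(* Main.v *)
Require Import Defs.
From mathcomp Require Import all_boot zify.
Set Warnings "-notation-overridden".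
Set Implicit Arguments. Unset Strict Implicit.
Section W.
Variable T : eqType.
Implicit Types s w u v x y z : seq T.
Lemma mem_pre w s : (w \in pre s) = [&& prefix w s, 0 < size w & size w < size s].
Proof.
apply/idP/idP.
- case/mapP => k; rewrite mem_iota => /andP[k1 k2] ->.
  rewrite prefix_take size_take.
  case: (ltnP k (size s)) => h; [by rewrite k1 h | lia].
- case/and3P => /[dup] hp; rewrite prefixE => /eqP e h0 h1.
  apply/mapP; exists (size w); last by rewrite e.
  rewrite mem_iota; lia.
Qed.
Lemma mem_suf w s : (w \in suf s) = [&& suffix w s, 0 < size w & size w < size s].
Proof.
apply/idP/idP.
- case/mapP => k; rewrite mem_iota => /andP[k1 k2] ->.
  rewrite suffix_drop size_drop.
  have : k < size s by lia.
  move=> h; apply/andP; split; lia.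
- case/and3P => /[dup] hp; rewrite suffixE => /eqP e h0 h1.
  apply/mapP; exists (size w); last by rewrite e.
  rewrite mem_iota; lia.
Qed.

Definition NO (S : seq (seq T)) :=
  (forall u v w, u \in S -> v \in S -> 0 < size w -> size w < size u ->
     size w < size v -> prefix w u -> suffix w v -> False) /\
  (forall u v, u \in S -> v \in S -> u != v -> size u <= size v -> infix u v -> False).

Lemma NO_E S : non_overlapping S <-> NO S.
Proof.
split.
- move=> /allP H; split.
  + move=> u v w uS vS h0 h1 h2 hp hs.
    have /andP[/allP H1 _] := allP (H u uS) v vS.
    have := H1 w; rewrite mem_pre mem_suf hp hs h0 h1 h2 => /(_ isT).
    done.
  + move=> u v uS vS ne le hi.
    have /andP[_ H2] := allP (H u uS) v vS.
    by move: H2; rewrite ne le hi.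
- case=> H1 H2; apply/allP => u uS; apply/allP => v vS; apply/andP; split.
  + apply/allP => w; rewrite mem_pre mem_suf => /and3P[hp h0 h1].
    apply/negP => /and3P[hs _ h2]; exact: (H1 u v w).
  + apply/implyP => ne; apply/implyP => le; apply/negP => hi; exact: (H2 u v).
Qed.

Lemma NO_eqmem S S' : S =i S' -> NO S -> NO S'.
Proof.
move=> e [H1 H2]; split.
- move=> u v w; rewrite -!e; exact: H1.
- move=> u v; rewrite -!e; exact: H2.
Qed.

Lemma size_infix x y : infix x y -> size x <= size y.
Proof. by case/infixP => s [s' ->]; rewrite !size_cat; lia. Qed.

Lemma prefix_rcons_small z u a : prefix z (rcons u a) -> size z <= size u -> prefix z u.
Proof.
move=> + h; rewrite !prefixE -cats1 takel_cat //.
Qed.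


Lemma suffix_rcons_inv z U a : suffix z (rcons U a) -> 0 < size z ->
  exists z', z = rcons z' a /\ suffix z' U.
Proof.
case/lastP: z => [//|z' b]; rewrite suffix_rcons => /andP[/eqP -> h] _.
by exists z'.
Qed.

Section Step.
Variables (S : seq (seq T)) (u : seq T) (a : T).
Hypotheses (uS : uniq S) (noS : NO S) (sz2 : forall s, s \in S -> 2 <= size s)
  (US : rcons u a \in S) (minU : forall v, v \in S -> size (rcons u a) <= size v).
Let U := rcons u a.
Let w := rcons U a.
Let S' := w :: rem U S.

Lemma memS' x : x \in S' -> x = w \/ (x \in S /\ x != U).
Proof.
rewrite in_cons (mem_rem_uniq _ uS) inE => /orP[/eqP->|/andP[h1 h2]]; [by left|by right].
Qed.

Lemma szw : size w = (size U).+1. Proof. by rewrite /w size_rcons. Qed.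

Lemma noF x y c : x \in S -> y \in S -> prefix [:: c] x -> suffix [:: c] y -> False.
Proof.
move=> xS yS hp hs; case: noS => H1 _; apply: (H1 x y [:: c]) => //=.
- by have := sz2 xS.
- by have := sz2 yS.
Qed.

Lemma reduce_pre x z : x \in S' -> prefix z x -> size z < size x -> size z < size w ->
  exists y, [/\ y \in S, prefix z y & (size z < size y \/ (y = U /\ z = U))].
Proof.
move=> /memS' [->|[xS _]] hp h1 h2; last by exists x; split => //; left.
have hz : size z <= size U by rewrite szw in h2.
have hpU : prefix z U by apply: prefix_rcons_small hp hz.
exists U; split => //.
case: (ltnP (size z) (size U)) => h; [by left | right].
split => //; move: hpU; rewrite prefixE.
have -> : size z = size U by apply/eqP; rewrite eqn_leq hz h.
by rewrite take_size => /eqP.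
Qed.

Lemma Cv y z : y \in S -> prefix z y -> size z <= size y -> 0 < size z ->
  size z < size w -> suffix z w -> False.
Proof.
move=> yS hp hzy h0 hzw hs.
have [z' [ez hs']] := suffix_rcons_inv hs h0.
subst z; rewrite size_rcons in hzy hzw h0.
case: z' hp hs' hzy hzw {h0 hs} => [|c z'] hp hs' hzy hzw.
- apply: (noF yS US hp); by rewrite /U -cats1 suffix_suffix.
- case: noS => H1 _; apply: (H1 y U (c :: z')) => //.
  + by rewrite szw in hzw.
  + exact: prefix_trans (prefix_rcons _ _) hp.
Qed.

Lemma NO_S' : NO S'.
Proof.
case: (noS) => H1 H2; split.
- move=> x v z xS' vS' h0 h1 h2 hp hs.
  have : size z < size w \/ (x \in S /\ v \in S).
    case/memS': (xS') h1 => [->|[xS _]] h1; first by left.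
    case/memS': (vS') h2 => [->|[vS _]] h2; first by left.
    by right.
  case=> [hzw|[xS vS]]; last exact: (H1 x v z).
  have [y [yS hpy hy]] := reduce_pre xS' hp h1 hzw.
  have hzy : size z <= size y by case: hy => [/ltnW//|[-> ->]].
  case/memS': vS' h2 hs => [-> _ hs|[vS nvU] h2 hs].
    exact: (Cv yS hpy hzy h0 hzw hs).
  case: hy => [hy|[ey ez]]; first exact: (H1 y v z).
  subst y z; apply: (H2 U v) => //; first by rewrite eq_sym.
  - exact: ltnW.
  - exact: suffixW.
- move=> x y xS' yS' nxy le hi.
  case/memS': xS' nxy le hi => [->|[xS nxU]] nxy le hi.
  + case/memS': yS' nxy le hi => [->|[yS nyU]] nxy le hi; first by rewrite eqxx in nxy.
    apply: (H2 U y) => //; first by rewrite eq_sym.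
    * apply: leq_trans le; by rewrite szw.
    * exact: infix_trans (infix_rcons _ _) hi.
  + case/memS': yS' nxy le hi => [->|[yS nyU]] nxy le hi; last exact: (H2 x y).
    move: hi; rewrite /w infix_rconsl => /orP[hs|hi]; last first.
      exact: (H2 x U xS US nxU (size_infix hi) hi).
    have mx := minU xS.
    rewrite szw in le.
    case: (ltnP (size U) (size x)) => hlt.
    * have ex : size x = size w by rewrite szw; apply/eqP; rewrite eqn_leq le hlt.
      move: hs; rewrite suffixE ex subnn drop0 => /eqP ex'.
      by move: nxy; rewrite -ex' eqxx.
    * have hx0 : 0 < size x by have := sz2 xS; lia.
      have [x' [ex hs']] := suffix_rcons_inv hs hx0.
      have sx : size x = size U by apply/eqP; rewrite eqn_leq hlt mx.
      apply: (H1 x U x') => //.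
      -- have := sz2 xS; rewrite ex size_rcons; lia.
      -- by rewrite ex size_rcons.
      -- rewrite -sx ex size_rcons; lia.
      -- by rewrite ex prefix_rcons.
Qed.

Lemma uniq_S' : uniq S'.
Proof.
rewrite /S' cons_uniq rem_uniq // andbT (mem_rem_uniq _ uS) inE.
apply/negP => /andP[nwU wS]; case: noS => _ H2.
apply: (H2 U w US wS); first by rewrite eq_sym.
- by rewrite szw.
- exact: infix_rcons.
Qed.

End Step.
Lemma extend (n k : nat) (S : seq (seq T)) :
  \sum_(s <- S) (n - size s) < k -> uniq S -> NO S ->
  (forall s, s \in S -> 2 <= size s <= n) ->
  exists S2 : seq (seq T), [/\ uniq S2, NO S2, size S2 = size S & forall s, s \in S2 -> size s = n].
Proof.
elim: k S => [//|k IH] S hk uS noS hsz.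
case: (boolP (all (fun s => size s == n) S)) => [/allP hall|].
  by exists S; split => // s /hall /eqP.
case/allPn => s0 s0S hs0.
have ex : exists m, has (fun s => size s == m) S by exists (size s0); apply/hasP; exists s0.
have [m /hasP [U US /eqP hUm] minm] := find_ex_minn ex.
have minU : forall v, v \in S -> size U <= size v.
  by move=> v vS; rewrite hUm; apply: minm; apply/hasP; exists v.
have hU2 := hsz U US.
have hmn : size U < n.
  have := hsz s0 s0S; have := minU s0 s0S; move: hs0; lia.
move: US minU hU2 hmn; case/lastP: U {hUm} => [|u a] US minU hU2 hmn; first by [].
have uS' := uniq_S' uS noS US.
have hsz2 : forall s, s \in S -> 2 <= size s by move=> s sS; case/andP: (hsz s sS).
have noS' := NO_S' uS noS hsz2 US minU.
set S' := rcons (rcons u a) a :: rem (rcons u a) S in uS' noS'.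
have hsum : \sum_(s <- S) (n - size s) = (n - size (rcons u a)) + \sum_(s <- rem (rcons u a) S) (n - size s).
  by rewrite (perm_big _ (perm_to_rem US)) big_cons.
have hk' : \sum_(s <- S') (n - size s) < k.
  rewrite big_cons; move: hk hmn; rewrite hsum !size_rcons.
  set X := (\sum_(s <- rem (rcons u a) S) (n - size s)).
  lia.
have hsz' : forall s, s \in S' -> 2 <= size s <= n.
  move=> s; rewrite /S' in_cons => /orP[/eqP ->|sr].
    rewrite size_rcons; move: hU2 hmn; lia.
  by apply: hsz; apply: mem_rem sr.
have [S2 [h1 h2 h3 h4]] := IH S' hk' uS' noS' hsz'.
exists S2; split => //.
by rewrite h3 /S' /= size_rem // prednK // -has_predT; apply/hasP; exists (rcons u a).
Qed.
End W.

Theorem mainTheorem3 (n q : nat) (S : seq (seq 'I_q)) :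
  2 <= n -> 2 <= q -> uniq S ->
  (forall s, s \in S -> 2 <= size s <= n) ->
  non_overlapping S ->
  size S <= Cnq n q.
Proof.
move=> _ _ uS hsz /NO_E noS.
have [S2 [u2 no2 e2 h2]] := @extend _ n (\sum_(s <- S) (n - size s)).+1 S (ltnSn _) uS noS hsz.
pose T' := pmap (insub : seq 'I_q -> option (n.-tuple 'I_q)) S2.
pose A := [set t in T'].
have cardA : #|A| = size S2.
  rewrite cardsE; move/card_uniqP: (pmap_sub_uniq (n.-tuple 'I_q) u2) => ->.
  rewrite size_pmap_sub; rewrite -[RHS]count_predT; apply: eq_in_count => s /h2 ->.
  by rewrite eqxx.
have memA : [seq val x | x in A] =i S2.
  move=> y; apply/imageP/idP.
  - by case=> t; rewrite inE mem_pmap_sub => ht ->.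
  - move=> yS; have hy : size y == n by rewrite h2.
    exists (Tuple hy) => //; by rewrite inE mem_pmap_sub.
have noA : non_overlapping [seq val x | x in A].
  apply/NO_E; apply: (NO_eqmem _ no2) => y; by rewrite memA.
rewrite -e2 -cardA.
exact: (@leq_bigmax_cond _ (fun A : {set n.-tuple 'I_q} => non_overlapping [seq val x | x in A]) (fun A => #|A|) A noA).
Qed.
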